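(* Let \(\mathcal{I}\) be an instance of 3-SAT and let \(G(\mathcal{I})\) and \(T(\mathcal{I})\) be the graph and spanning tree constructed below. If \(\mathcal{I}\) does not admit a satisfying assignment, then \(T(\mathcal{I})\) is not the \(\mathcal{F}\)-tree of any LBFS ordering of \(G(\mathcal{I})\).
   Context: Let \(\mathcal{I}\) have variables \(x_1,\dots,x_k\) and clauses \(C_1,\dots,C_l\), each a disjunction of three literals. \(G(\mathcal{I})\) has vertices: literal vertices \(X=\{x_1,\dots,x_k,\overline{x_1},\dots,\overline{x_k}\}\); for each clause \(C_i\) three vertices \(a_i,c_i,t_i\); and four vertices \(r,p,q,u\). Edges: any two vertices of \(X\) are adjacent except the pairs \(x_j\overline{x_j}\); each \(\{a_i,c_i,t_i\}\) is a triangle; \(c_i\) is adjacent to the literal vertices of the literals occurring in \(C_i\); \(r\) is adjacent to every vertex except \(u\) and the \(t_i\); \(u\) is adjacent to every vertex except \(r\) and the \(t_i\); \(p\) is adjacent to every vertex of \(X\) and to \(q\); \(q\) is adjacent to every vertex of \(X\) and to every \(a_i\); there are no other edges. \(T(\mathcal{I})\) is the spanning tree consisting of all edges of \(G(\mathcal{I})\) incident to \(r\), the edge \(up\), and the edges \(c_it_i\) for \(i=1,\dots,l\). An LBFS ordering (with \(n\) the number of vertices) is produced by starting with label \((n)\) on a start vertex, empty labels elsewhere, and for \(j=1,\dots,n\) picking an unnumbered vertex of lexicographically largest label as \(v_j\) and appending \(n-j\) to the labels of its unnumbered neighbors (ties arbitrary). The \(\mathcal{F}\)-tree of an ordering \((v_1,\dots,v_n)\)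 has, for each \(v\ne v_1\), an edge from \(v\) to its leftmost neighbor in the ordering. *)

(* Defs.v *)
From HB Require Import structures.
From mathcomp Require Import all_boot.
Set Implicit Arguments. Unset Strict Implicit. Unset Printing Implicit Defensive.

(* A literal over variables x_0..x_{k-1}: (j, true) is x_j, (j, false) is ~x_j. *)
Definition literal (k : nat) := ('I_k * bool)%type.

Definition instance (k l : nat) := 'I_l -> 'I_3 -> literal k.

Definition lit_true k (a : 'I_k -> bool) (L : literal k) : bool := a L.1 == L.2.

Definition satisfiable k l (cl : instance k l) : Prop :=
  exists a : 'I_k -> bool, forall i : 'I_l, exists j : 'I_3, lit_true a (cl i j).

Inductive vtx (k l : nat) :=
| VLit of 'I_k & bool   (* literal vertices X: VLit j true = x_j, VLit j false = ~x_j *)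
| VA of 'I_l
| VC of 'I_l
| VT of 'I_l
| VR | VP | VQ | VU.
Arguments VLit {k l}. Arguments VA {k l}. Arguments VC {k l}. Arguments VT {k l}.
Arguments VR {k l}. Arguments VP {k l}. Arguments VQ {k l}. Arguments VU {k l}.

Section VtxFin.
Variables k l : nat.
Definition vtx_enc (v : vtx k l) : (('I_k * bool) + ('I_l * 'I_3 + 'I_4))%type :=
  match v with
  | VLit j b => inl (j, b)
  | VA i => inr (inl (i, @Ordinal 3 0 isT))
  | VC i => inr (inl (i, @Ordinal 3 1 isT))
  | VT i => inr (inl (i, @Ordinal 3 2 isT))
  | VR => inr (inr (@Ordinal 4 0 isT))
  | VP => inr (inr (@Ordinal 4 1 isT))
  | VQ => inr (inr (@Ordinal 4 2 isT))
  | VU => inr (inr (@Ordinal 4 3 isT))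
  end.
Definition vtx_dec (c : (('I_k * bool) + ('I_l * 'I_3 + 'I_4))%type) : option (vtx k l) :=
  match c with
  | inl (j, b) => Some (VLit j b)
  | inr (inl (i, t)) =>
      match val t with 0 => Some (VA i) | 1 => Some (VC i) | _ => Some (VT i) end
  | inr (inr t) =>
      match val t with 0 => Some VR | 1 => Some VP | 2 => Some VQ | _ => Some VU end
  end.
Lemma vtx_encK : pcancel vtx_enc vtx_dec. Proof. by case. Qed.
End VtxFin.
HB.instance Definition _ (k l : nat) :=
  Finite.copy (vtx k l) (pcan_type (@vtx_encK k l)).

Section Graph.
Variables (k l : nat) (cl : instance k l).

Definition occurs (i : 'I_l) (L : literal k) : bool := [exists j : 'I_3, cl i j == L].

Definition G_base (v w : vtx k l) : bool :=
  match v, w with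
  | VLit j _, VLit j' _ => j != j'                 (* X is complete minus x_j ~x_j *)
  | VA i, VC i' | VC i, VT i' | VA i, VT i' => i == i'  (* triangles a_i c_i t_i *)
  | VC i, VLit j b => occurs i (j, b)
  | VR, VU | VR, VT _ => false
  | VR, _ => true                                   (* r ~ all but u, t_i *)
  | VU, VR | VU, VT _ => false
  | VU, _ => true                                   (* u ~ all but r, t_i *)
  | VP, VLit _ _ | VP, VQ => true
  | VQ, VLit _ _ | VQ, VA _ => true
  | _, _ => false
  end.

Definition G_adj (v w : vtx k l) : bool := (v != w) && (G_base v w || G_base w v).

Definition T_base (v w : vtx k l) : bool :=
  match v, w with
  | VR, _ => G_adj VR w
  | VU, VP => true
  | VC i, VT i' => i == i'
  | _, _ => false
  end.
Definition T_edge (v w : vtx k l) : bool := T_base v w || T_base w v.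
End Graph.

Section LBFS.
Variables (V : finType) (adj : rel V).

Fixpoint lexle (s t : seq nat) : bool :=
  match s, t with
  | [::], _ => true
  | _ :: _, [::] => false
  | x :: s', y :: t' => (x < y) || ((x == y) && lexle s' t')
  end.

(* The label of vertex w just before the (j+1)-th vertex is chosen (0-based j),
   in the LBFS run with start vertex st that numbers vertices in the order s:
   the start vertex initially carries (n), and when v_{i+1} = nth st s i is
   numbered (at step i+1), n - (i+1) is appended to the labels of its
   neighbours.  (Appending to already-numbered vertices is harmless, since
   only labels of unnumbered vertices are compared.) *)
Definition lbfs_label (st : V) (s : seq V) (j : nat) (w : V) : seq nat :=
  (if w == st then [:: #|V|] else [::]) ++
  [seq #|V| - i.+1 | i <- iota 0 j & adj (nth st s i) w].

Definition is_LBFS (s : seq V) : Prop :=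
  perm_eq s (enum V) /\
  exists st : V, forall j, j < #|V| ->
    forall w : V, w \notin take j s ->
      lexle (lbfs_label st s j w) (lbfs_label st s j (nth st s j)).

Definition leftmost_nbr (s : seq V) (v w : V) : bool :=
  (index v s != 0) && adj v w &&
  [forall z, adj v z ==> (index w s <= index z s)].

Definition Ftree_edge (s : seq V) (v w : V) : bool :=
  leftmost_nbr s v w || leftmost_nbr s w v.
End LBFS.

(* Main.v *)
Require Import Defs.
From HB Require Import structures.
From mathcomp Require Import all_boot.
From mathcomp Require Import zify.

Set Implicit Arguments. Unset Strict Implicit. Unset Printing Implicit Defensive.

Section Gen.
Variables (V : finType) (adj : rel V).

Lemma lex_false N len a m (P Q : pred nat) :
  a + len <= N -> a <= m < a + len -> P m -> ~~ Q m ->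
  (forall i, a <= i < m -> P i = Q i) ->
  lexle [seq N - i.+1 | i <- iota a len & P i]
        [seq N - i.+1 | i <- iota a len & Q i] = false.
Proof.
elim: len a => [|len IH] a HN Hm HP HQ Heq.
  by move: Hm; rewrite addn0; case/andP=> H1 H2; move: (leq_trans H2 H1); rewrite ltnn.
rewrite /=.
case: (ltngtP a m) => Ham.
- have -> : P a = Q a by apply: Heq; rewrite leqnn Ham.
  have IH' := IH a.+1 _ _ HP HQ _.
  case: (Q a) => /=.
  + rewrite ltnn eqxx /=; apply: IH'.
    * by lia.
    * by move: Hm Ham; lia.
    * by move=> i /andP [Hi1 Hi2]; apply: Heq; rewrite Hi2 ltnW.
  + apply: IH'.
    * by lia.
    * by move: Hm Ham; lia.
    * by move=> i /andP [Hi1 Hi2]; apply: Heq; rewrite Hi2 ltnW.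
- by move: Hm; rewrite leqNgt Ham.
- subst m; rewrite HP (negbTE HQ) /=.
  case E: [seq x <- iota a.+1 len | Q x] => [|x r] //=.
  have : x \in [seq x <- iota a.+1 len | Q x] by rewrite E mem_head.
  rewrite mem_filter mem_iota => /andP [_ /andP [Hx1 Hx2]].
  have Hlt : N - x.+1 < N - a.+1.
    by lia.
  rewrite ltnNge (ltnW Hlt) /= (gtn_eqF Hlt) //.
Qed.

Lemma parent_exists (s : seq V) x y0 :
  adj x y0 -> index x s != 0 -> exists y, leftmost_nbr adj s x y.
Proof.
move=> Hxy Hx.
case: (@arg_minnP V y0 (fun z => adj x z) (fun z => index z s) Hxy) => y Hy Hmin.
exists y; rewrite /leftmost_nbr Hx Hy /=.
by apply/forallP => z; apply/implyP => Hz; apply: Hmin.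
Qed.

Lemma size_perm_enum (s : seq V) : perm_eq s (enum V) -> size s = #|V|.
Proof. by move/perm_size; rewrite -cardE. Qed.

End Gen.

Section Spec.
Variables (k l : nat) (cl : instance k l).

Definition veq (v w : vtx k l) : bool :=
  match v, w with
  | VLit j b, VLit j' b' => (j == j') && (b == b')
  | VA i, VA i' | VC i, VC i' | VT i, VT i' => i == i'
  | VR, VR | VP, VP | VQ, VQ | VU, VU => true
  | _, _ => false
  end.

Lemma veqE v w : (v == w) = veq v w.
Proof.
apply/idP/idP.
  by move/eqP => ->; case: w => //= *; rewrite !eqxx.
by case: v => [j b|i|i|i||||]; case: w => [j' b'|i'|i'|i'||||] //=;
  try (move=> /andP [/eqP -> /eqP ->] //); move=> /eqP ->.
Qed.

Notation G := (G_adj cl).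

Ltac gsimp := rewrite /G_adj ?veqE /=.

Lemma TQ y : T_edge cl VQ y -> y = VR.
Proof. by case: y. Qed.
Lemma TA i y : T_edge cl (VA i) y -> y = VR.
Proof. by case: y. Qed.
Lemma TLit j b y : T_edge cl (VLit j b) y -> y = VR.
Proof. by case: y. Qed.
Lemma TU y : T_edge cl VU y -> y = VP.
Proof. by case: y. Qed.
Lemma TT i y : T_edge cl (VT i) y -> y = VC i.
Proof. case: y => //= i'; rewrite /T_edge /= => /eqP -> //. Qed.

Lemma G_irr v : G v v = false.
Proof. by rewrite /G_adj eqxx. Qed.

Lemma G_sym v w : G v w = G w v.
Proof. by rewrite /G_adj eq_sym orbC. Qed.

Lemma nUR v : v != VR -> G VU v = false -> G VR v = false.
Proof. by case: v => //= *; gsimp. Qed.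

Lemma adjF z jv b :
  (forall x, z != VA x) -> (forall x, z != VC x) -> z != VQ ->
  (forall b'', z != VLit jv b'') -> G z VQ = G z (VLit jv b).
Proof.
case: z => [j' b'|i|i|i||||] HA HC HQ HL //=; gsimp => //.
- case: (eqVneq j' jv) => [E|E] //=.
  by subst; move: (HL b'); rewrite eqxx.
- by move: (HA i); rewrite eqxx.
- by move: (HC i); rewrite eqxx.
Qed.

Lemma adjG z i :
  (forall x, z != VA x) -> (forall x, z != VC x) -> z != VQ ->
  (forall j b, occurs cl i (j, b) -> z != VLit j b) -> G z (VA i) = G z (VC i).
Proof.
case: z => [j' b'|i'|i'|i'||||] HA HC HQ HL //=; gsimp => //.
- case E: (occurs cl i (j', b')) => //.
  by move: (HL _ _ E); rewrite eqxx.
- by move: (HA i'); rewrite eqxx.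
- by move: (HC i'); rewrite eqxx.
Qed.

End Spec.

Theorem lemma7 (k l : nat) (cl : instance k l) :
  ~ satisfiable cl ->
  forall s : seq (vtx k l),
    is_LBFS (G_adj cl) s ->
    ~ (forall v w : vtx k l, T_edge cl v w = Ftree_edge (G_adj cl) s v w).
Proof.
move=> Hns s [Hperm [st Hlb]] HT.
have [i0 _] : exists i0 : 'I_l, True.
  case: l cl Hns s Hperm st Hlb HT => [|l'] cl' Hns' *; last by exists ord0.
  by exfalso; apply: Hns'; exists (fun _ => true); case.
set G := G_adj cl in Hlb HT *.
have Hmem v : v \in s by rewrite (perm_mem Hperm) mem_enum.
have Huniq : uniq s by rewrite (perm_uniq Hperm) enum_uniq.
have Hsize := size_perm_enum Hperm.
have Hidx v : index v s < size s by rewrite index_mem.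
have Hinj v w : index v s = index w s -> v = w.
  by move=> E; rewrite -(nth_index VR (Hmem v)) E nth_index.
have Hnth x0 v : nth x0 s (index v s) = v by apply: nth_index.
have Hpar x y0 : G x y0 -> index x s != 0 ->
    exists y, T_edge cl x y /\ forall z, G x z -> index y s <= index z s.
  move=> Hxy Hx; have [y Hy] := parent_exists Hxy Hx.
  exists y; split; first by rewrite HT /Ftree_edge Hy.
  by move: Hy => /andP [_ /forallP H] z Hz; move: (H z); rewrite Hz.
have Hneq v w : v != w -> index v s != index w s.
  by move=> H; apply/eqP => /Hinj /eqP; rewrite (negbTE H).
have HR : index VR s = 0.
  apply/eqP; apply/negPn/negP => HR.
  have Hs0 : 0 < size s by apply: leq_ltn_trans (Hidx VR).
  set v1 := nth VR s 0.
  have Hv1 : index v1 s = 0 by rewrite index_uniq.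
  have [x [Hxv [HxT HxR]]] : exists x, G x v1 /\ (forall y, T_edge cl x y -> y = VR) /\ G x VR.
    case Ev: v1 => [j b|i|i|i||||].
    - by exists VQ; split; [|split; [exact: TQ|]].
    - by exists VQ; split; [|split; [exact: TQ|]].
    - exists (VLit (cl i ord0).1 (cl i ord0).2); split; [|split; [exact: TLit|]] => //.
      rewrite /G /G_adj /=.
      by apply/existsP; exists ord0; rewrite -surjective_pairing.
    - exists (VA i); split; [|split; [exact: TA|]] => //.
      by rewrite /G /G_adj veqE /= eqxx.
    - by move: Hv1; rewrite Ev => E; move: HR; rewrite E.
    - by exists VQ; split; [|split; [exact: TQ|]].
    - exists (VA i0); split; [|split; [exact: TA|]] => //.
    - by exists VQ; split; [|split; [exact: TQ|]].
  have Hx0 : index x s != 0.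
    rewrite -Hv1; apply: Hneq; apply/eqP => E; by move: Hxv; rewrite E /G G_irr.
  have [y [Hy Hmin]] := Hpar x VR HxR Hx0.
  move: (Hmin v1 Hxv); rewrite Hv1 (HxT y Hy) leqn0.
  by rewrite (negbTE HR).
have Hst : st = VR.
  have Hs0 : 0 < size s by apply: leq_ltn_trans (Hidx VR).
  rewrite Hsize in Hs0; have Hst0 : st \notin take 0 s by rewrite take0.
  move: (Hlb 0 Hs0 st Hst0).
  have -> : nth st s 0 = VR.
    by rewrite (set_nth_default VR) -?HR ?Hnth // Hsize.
  rewrite /lbfs_label eqxx /=.
  by case: eqP.
subst st.
have HdomV v w m : index v s < index w s -> m < index v s ->
    G (nth VR s m) w -> ~~ G (nth VR s m) v ->
    (forall i, i < m -> G (nth VR s i) w = G (nth VR s i) v) -> False.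
  move=> Hvw Hm H1 H2 H3.
  have Hj := Hidx v; rewrite Hsize in Hj.
  have Hw : w \notin take (index v s) s by rewrite in_take // -leqNgt ltnW.
  have HwR : w != VR by apply/eqP => E; move: Hvw; rewrite E HR.
  have HvR : v != VR by apply/eqP => E; move: Hm; rewrite E HR.
  move: (Hlb _ Hj w Hw); rewrite Hnth /lbfs_label (negbTE HwR) (negbTE HvR) /=.
  rewrite (@lex_false _ (index v s) 0 m) //.
  - by rewrite add0n ltnW.
have Hn0 : nth VR s 0 = VR by rewrite -HR Hnth.
have HU0 : index VU s != 0 by rewrite -HR; apply: Hneq.
have [y [Hy HminU]] := Hpar VU VP isT HU0.
rewrite (TU Hy) in HminU.
have HP1 : index VP s = 1.
  have HP0 : index VP s != 0 by rewrite -HR; apply: Hneq.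
  apply/eqP; apply/negPn/negP => HP1.
  have Hs1 : 1 < size s by have := Hidx VP; lia.
  set v2 := nth VR s 1.
  have Hv2 : index v2 s = 1 by rewrite index_uniq.
  case Hadj: (G VU v2).
    by move: (HminU v2 Hadj); rewrite Hv2; lia.
  have Hv2R : v2 != VR by apply/eqP => E; move: Hv2; rewrite E HR.
  apply: (HdomV v2 VP 0).
  - by rewrite Hv2; lia.
  - by rewrite Hv2.
  - by rewrite Hn0.
  - by rewrite Hn0 /G nUR.
  - by [].
have Hn1 : nth VR s 1 = VP by rewrite -HP1 Hnth.
have HCA i : index (VC i) s < index (VA i) s.
  have H0 : index (VT i) s != 0 by rewrite -HR; apply: Hneq.
  have [y' [Hy' Hm]] := Hpar (VT i) (VC i) ltac:(by rewrite /G /G_adj veqE /= eqxx) H0.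
  rewrite (TT Hy') in Hm.
  have := Hm (VA i) ltac:(by rewrite /G /G_adj veqE /= eqxx).
  rewrite leq_eqVlt => /orP [/eqP /Hinj //|//].
have HQC i : index VQ s < index (VC i) s.
  rewrite ltnNge; apply/negP => Hle.
  have Hlt : index (VC i) s < index VQ s by rewrite ltn_neqAle Hneq // Hle.
  have HC0 : index (VC i) s != 0 by rewrite -HR; apply: Hneq.
  have HC1' : index (VC i) s != 1 by rewrite -HP1; apply: Hneq.
  have HC1 : 1 < index (VC i) s by lia.
  apply: (HdomV (VC i) VQ 1 Hlt HC1).
  - by rewrite Hn1.
  - by rewrite Hn1 /G /G_adj /= ?andbF.
  - move=> x; rewrite ltnS leqn0 => /eqP ->; rewrite Hn0.
    by rewrite /G /G_adj veqE.
have HQA i : index VQ s < index (VA i) s := ltn_trans (HQC i) (HCA i).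
have Hbef x : x < index VQ s ->
    [/\ forall y, nth VR s x != VA y, forall y, nth VR s x != VC y & nth VR s x != VQ].
  move=> Hx.
  have Hxs : x < size s by apply: ltn_trans Hx (Hidx VQ).
  have Hix : index (nth VR s x) s = x by rewrite index_uniq.
  split => [y'|y'|]; apply/eqP => E; move: Hix; rewrite E => Hix; move: Hx; rewrite -Hix.
  - by rewrite ltnNge (ltnW (HQA y')).
  - by rewrite ltnNge (ltnW (HQC y')).
  - by rewrite ltnn.
have HF jv b : index (VLit jv b) s < index (VLit jv (~~b)) s ->
    index (VLit jv (~~b)) s < index VQ s -> False.
  move=> H1 H2.
  apply: (HdomV (VLit jv (~~b)) VQ (index (VLit jv b) s) H2 H1).
  - by rewrite Hnth.
  - by rewrite Hnth /G /G_adj /= eqxx ?andbF.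
  - move=> x Hx.
    have Hxq : x < index VQ s by lia.
    have [HA HC HQ] := Hbef x Hxq.
    have Hxs : x < size s by apply: ltn_trans Hxq (Hidx VQ).
    have Hix : index (nth VR s x) s = x by rewrite index_uniq.
    rewrite /G; apply: adjF => // b''; apply/eqP => E; move: Hix; rewrite E.
    case: (eqVneq b'' b) => [->|Hb]; first by lia.
    have -> : b'' = ~~ b by move: Hb; case: (b''); case: (b).
    by lia.
have HG i : exists j3 : 'I_3, index (VLit (cl i j3).1 (cl i j3).2) s < index VQ s.
  case: (boolP [exists j3 : 'I_3, index (VLit (cl i j3).1 (cl i j3).2) s < index VQ s])
    => [/existsP //|Hno].
  exfalso; apply: (HdomV (VC i) (VA i) (index VQ s) (HCA i) (HQC i)).
  - by rewrite Hnth.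
  - by rewrite Hnth /G /G_adj /= ?andbF.
  - move=> x Hx.
    have [HA HC HQ] := Hbef x Hx.
    have Hxs : x < size s by apply: ltn_trans Hx (Hidx VQ).
    rewrite /G; apply: adjG => // j b /existsP [j3 /eqP Ej3]; apply/eqP => E.
    move/negP: Hno; apply; apply/existsP; exists j3.
    by rewrite Ej3 /= -E index_uniq.
apply: Hns.
exists (fun jv => index (VLit jv true) s < index VQ s) => i.
have [j3 Hj3] := HG i; exists j3; rewrite /lit_true.
move: Hj3; case: (cl i j3) => jv [] /= H; first by rewrite H.
rewrite eqbF_neg; apply/negP => H'.
case: (ltngtP (index (VLit jv true) s) (index (VLit jv false) s)) => Hc.
- exact: (HF jv true Hc H).
- exact: (HF jv false Hc H').
- by move/Hinj: Hc.
Qed.
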